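(* Let $X$ be an algebraic variety. The assignment $U\mapsto\mathcal{T}(U)$ to every Zariski open $U\subset X$, together with the restriction of functions $\mathcal{T}(V)\to\mathcal{T}(U)$ for Zariski open $U\subset V$, is a sheaf on $X$ (in the Zariski topology).
   Context: An affine algebraic variety is a topological space with a sheaf of real-valued functions isomorphic as a ringed space (via a ''closed embedding'' $i$) to an algebraic set $Y\subset\mathbb{R}^n$ (common zero locus of real polynomials) with its Zariski topology and sheaf of regular functions. An algebraic variety is a topological space with a sheaf of real-valued functions admitting a finite open cover by affine algebraic varieties; Zariski open subsets of (affine) algebraic varieties are (affine) algebraic varieties. A tempered function on $\mathbb{R}^n$ is a smooth function all of whose partial derivatives are bounded by $C(1+|x|^2)^N$ for some $C,N$. For affine $X$, $\mathcal{T}(X)$ is the space of $f:X\to\mathbb{R}$ such that $f\circ i^{-1}$ is the restriction to $i(X)$ of a tempered function on $\mathbb{R}^n$ (independent of $i$). For a general algebraic variety $X$, $\mathcal{T}(X)$ is the set of $t:X\to\mathbb{R}$ such that $t|_{X_i}\in\mathcal{T}(X_i)$ for every member $X_i$ of some (equivalently every) finite Zariski open cover of $X$ by affine algebraic varieties. *)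

(* Defs.v *)
From mathcomp Require Import all_boot all_algebra.
From mathcomp Require Import all_classical all_reals all_analysis.
Set Implicit Arguments. Unset Strict Implicit. Unset Printing Implicit Defensive.
Import GRing.Theory Num.Theory.
Local Open Scope classical_set_scope.
Local Open Scope ring_scope.

Section Defs.
Variable R : realType.

Definition enorm (n : nat) (x : 'rV[R]_n) : R :=
  Num.sqrt (\sum_(i < n) x ord0 i ^+ 2).

Definition evec (n : nat) (i : 'I_n) : 'rV[R]_n := delta_mx ord0 i.

Inductive polyfun (n : nat) : ('rV[R]_n -> R) -> Prop :=
  | polyfun_cst (c : R) : polyfun (fun _ => c)
  | polyfun_coord (i : 'I_n) : polyfun (fun x => x ord0 i)
  | polyfun_add p q : polyfun p -> polyfun q -> polyfun (fun x => p x + q x)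
  | polyfun_mul p q : polyfun p -> polyfun q -> polyfun (fun x => p x * q x).

Definition zero_locus (n : nat) (S : set ('rV[R]_n -> R)) : set 'rV[R]_n :=
  [set x | forall p, S p -> p x = 0].

Definition algebraic_set (n : nat) (Y : set 'rV[R]_n) : Prop :=
  exists S : set ('rV[R]_n -> R), (forall p, S p -> polyfun p) /\ Y = zero_locus S.

Definition zopen_in (n : nat) (Y V : set 'rV[R]_n) : Prop :=
  exists S : set ('rV[R]_n -> R), (forall p, S p -> polyfun p) /\
    V = Y `&` ~` zero_locus S.

Definition regular_on (n : nat) (Y V : set 'rV[R]_n) (g : 'rV[R]_n -> R) : Prop :=
  forall y, V y -> exists W, [/\ zopen_in Y W, W y & W `<=` V] /\
    exists p q, [/\ polyfun p, polyfun q &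
      forall z, W z -> q z != 0 /\ g z = p z / q z].

Definition partial (n : nat) (i : 'I_n) (F : 'rV[R]_n -> R) : 'rV[R]_n -> R :=
  fun x => derive1 (fun h : R => F (x + h *: evec i)) 0.

Definition iter_partial (n : nat) (s : seq 'I_n) (F : 'rV[R]_n -> R) :
  'rV[R]_n -> R := foldr (@partial n) F s.

Definition continuous_Rn (n : nat) (F : 'rV[R]_n -> R) : Prop :=
  forall x (e : R), 0 < e -> exists d : R, 0 < d /\
    forall y, enorm (y - x) < d -> `|F y - F x| < e.

Definition smooth_Rn (n : nat) (F : 'rV[R]_n -> R) : Prop :=
  forall s : seq 'I_n,
    continuous_Rn (iter_partial s F) /\
    forall (i : 'I_n) x,
      derivable (fun h : R => iter_partial s F (x + h *: evec i)) 0 1.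

Definition tempered_Rn (n : nat) (F : 'rV[R]_n -> R) : Prop :=
  smooth_Rn F /\
  forall s : seq 'I_n, exists (C : R) (N : nat), forall x,
    `|iter_partial s F x| <= C * (1 + enorm x ^+ 2) ^+ N.

(* A space is a type X with a family of open sets [opens] and, for each open
   U, a set [O U] of functions; a function on U is represented by any
   f : X -> R, only its values on U being relevant. *)

Definition is_topology (X : Type) (opens : set (set X)) : Prop :=
  [/\ opens setT, opens set0,
      (forall U V, opens U -> opens V -> opens (U `&` V)) &
      (forall (J : Type) (U : J -> set X), (forall j, opens (U j)) ->
          opens (\bigcup_j U j))].

Definition is_sheaf_of_functions (X : Type) (opens : set (set X))
    (O : set X -> set (X -> R)) : Prop :=
  (forall U (f g : X -> R), opens U -> (forall x, U x -> f x = g x) ->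
      O U f -> O U g) /\
  (* restriction + gluing (locality) *)
  (forall U (J : Type) (W : J -> set X), opens U -> (forall j, opens (W j)) ->
      \bigcup_j W j = U ->
      forall f : X -> R, O U f <-> (forall j, O (W j) f)).

(* [phi] is an isomorphism of ringed spaces from the open subspace U of
   (X, opens, O) onto the algebraic set Y with its Zariski topology and its
   sheaf of regular functions. *)
Definition affine_chart (X : Type) (opens : set (set X)) (O : set X -> set (X -> R))
    (U : set X) (n : nat) (Y : set 'rV[R]_n) (phi : X -> 'rV[R]_n) : Prop :=
  [/\ algebraic_set Y,
      (forall x, U x -> Y (phi x)) /\
      (forall x y, U x -> U y -> phi x = phi y -> x = y),
      (forall y, Y y -> exists2 x, U x & phi x = y),
      (forall W, W `<=` U -> (opens W <-> zopen_in Y (phi @` W))) &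
      (forall W, W `<=` U -> opens W -> forall f : X -> R,
          O W f <-> exists g : 'rV[R]_n -> R,
            regular_on Y (phi @` W) g /\ forall x, W x -> f x = g (phi x))].

Definition affine_open (X : Type) (opens : set (set X)) (O : set X -> set (X -> R))
    (U : set X) : Prop :=
  opens U /\ exists n (Y : set 'rV[R]_n) (phi : X -> 'rV[R]_n),
    affine_chart opens O U Y phi.

Definition algebraic_variety (X : Type) (opens : set (set X))
    (O : set X -> set (X -> R)) : Prop :=
  [/\ is_topology opens, is_sheaf_of_functions opens O &
      exists (k : nat) (U : 'I_k -> set X),
        (forall i, affine_open opens O (U i)) /\ \bigcup_i U i = setT].

(* T(U) for an affine open U: t o i^{-1} is the restriction to i(U) of a
   tempered function on R^n, for an embedding i *)
Definition tempered_affine (X : Type) (opens : set (set X))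
    (O : set X -> set (X -> R)) (U : set X) (t : X -> R) : Prop :=
  exists n (Y : set 'rV[R]_n) (phi : X -> 'rV[R]_n),
    affine_chart opens O U Y phi /\
    exists F : 'rV[R]_n -> R, tempered_Rn F /\ forall x, U x -> t x = F (phi x).

(* T(V) for a Zariski open V of X (itself an algebraic variety with the
   induced structure): t restricted to each member of some finite cover of V
   by affine open subsets lies in T of that member *)
Definition tempered_on (X : Type) (opens : set (set X))
    (O : set X -> set (X -> R)) (V : set X) (t : X -> R) : Prop :=
  exists (k : nat) (U : 'I_k -> set X),
    [/\ (forall i, affine_open opens O (U i)), (forall i, U i `<=` V),
        \bigcup_i U i = V &
        (forall i, tempered_affine opens O (U i) t)].

End Defs.

(* Main.v *)
Require Import Defs.
From mathcomp Require Import all_boot all_algebra.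
From mathcomp Require Import all_classical all_reals all_analysis.
From mathcomp Require Import zify ring.
Set Implicit Arguments. Unset Strict Implicit. Unset Printing Implicit Defensive.
Import order.Order.TTheory GRing.Theory Num.Theory.
Local Open Scope classical_set_scope.
Local Open Scope ring_scope.

Section Gen.
Variable A : comNzRingType.

Inductive gen (L : seq A) : A -> Prop :=
| gen0 : gen L 0
| genM a l x : l \in L -> gen L x -> gen L (a * l + x).

Lemma gen_add L x y : gen L x -> gen L y -> gen L (x + y).
Proof. elim=> [|a l z Hl _ IH] Hy; first by rewrite add0r.
by rewrite -addrA; apply: genM => //; apply: IH. Qed.

Lemma gen_mul L b x : gen L x -> gen L (b * x).
Proof. elim=> [|a l z Hl _ IH]; first by rewrite mulr0; exact: gen0.
by rewrite mulrDr mulrA; apply: genM. Qed.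

Lemma gen_opp L x : gen L x -> gen L (- x).
Proof. by move=> H; rewrite -mulN1r; apply: gen_mul. Qed.

Lemma gen_mem L l : l \in L -> gen L l.
Proof. by move=> H; have := genM 1 H (gen0 L); rewrite mul1r addr0. Qed.

Lemma gen_trans L G x : (forall g, g \in G -> gen L g) -> gen G x -> gen L x.
Proof. move=> HG; elim=> [|a l z Hl _ IH]; first exact: gen0.
by apply: gen_add => //; apply: gen_mul; apply: HG. Qed.

Lemma gen_sub L L' x : {subset L <= L'} -> gen L x -> gen L' x.
Proof. move=> HL; apply: gen_trans => g Hg; apply: gen_mem; exact: HL. Qed.

Definition Noeth := forall S : A -> Prop, exists L : seq A,
  (forall l, l \in L -> S l) /\ forall s, S s -> gen L s.

End Gen.


Lemma genI (A : comNzRingType) (L : seq A) (Q : A -> Prop) :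
  Q 0 -> (forall x y, Q x -> Q y -> Q (x + y)) -> (forall a x, Q x -> Q (a * x)) ->
  (forall l, l \in L -> Q l) -> forall c, gen L c -> Q c.
Proof. move=> Q0 QD QM QL c; elim=> [|a l x Hl _ IH] //; apply: QD => //; apply: QM; exact: QL. Qed.

Lemma fin_choice (T : eqType) (U : eqType) (L : seq T) (P : T -> U -> Prop) :
  (forall l, l \in L -> exists u, P l u) ->
  exists F : seq U, (forall u, u \in F -> exists l, P l u) /\
    (forall l, l \in L -> exists u, u \in F /\ P l u).
Proof.
elim: L => [|a L IH] H; first by exists [::]; split.
have [u Hu] := H a (mem_head _ _).
have [|F [H1 H2]] := IH; first by move=> l Hl; apply: H; rewrite inE Hl orbT.
exists (u :: F); split.
  by move=> v; rewrite inE => /orP [/eqP ->|/H1//]; exists a.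
move=> l; rewrite inE => /orP [/eqP ->|/H2 [v [Hv Pv]]]; first by exists u; rewrite mem_head.
by exists v; rewrite inE Hv orbT.
Qed.

Lemma Noeth_field (F : fieldType) : Noeth F.
Proof.
move=> S; have [[s [Ss s0]]|N] := pselect (exists s, S s /\ s != 0).
  exists [:: s]; split; first by move=> l; rewrite inE => /eqP ->.
  move=> x _; have -> : x = (x / s) * s + 0 by rewrite addr0 mulfVK.
  by apply: genM; [rewrite mem_head|exact: gen0].
exists [::]; split => // x Sx; case: (eqVneq x 0) => [->|nx]; first exact: gen0.
by exfalso; apply: N; exists x.
Qed.

Section Hilbert.
Variable A : comNzRingType.
Hypothesis HA : Noeth A.
Variable S : {poly A} -> Prop.

Let I p := exists L, (forall l, l \in L -> S l) /\ gen L p.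

Let I0 : I 0. Proof. by rewrite /I; exists [::]; split => //; exact: gen0. Qed.
Let ID x y : I x -> I y -> I (x + y).
Proof.
rewrite /I.
move=> [L1 [H1 G1]] [L2 [H2 G2]]; exists (L1 ++ L2); split.
  by move=> l; rewrite mem_cat => /orP [/H1|/H2].
by apply: gen_add; apply: gen_sub (G1) || apply: gen_sub (G2); move=> l Hl; rewrite mem_cat Hl ?orbT.
Qed.
Let IM a x : I x -> I (a * x).
Proof. by rewrite /I => -[L [H G]]; exists L; split => //; apply: gen_mul. Qed.
Let Igen F c : (forall f, f \in F -> I f) -> gen F c -> I c.
Proof. by move=> HF; apply: (@genI _ F I); [exact: I0|exact: ID|exact: IM|exact: HF]. Qed.

Let Jd d c := exists f, I f /\ (size f <= d.+1)%N /\ f`_d = c.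

Let Jd0 d : Jd d 0. Proof. by rewrite /Jd; exists 0; rewrite size_poly0 coef0. Qed.
Let JdD d x y : Jd d x -> Jd d y -> Jd d (x + y).
Proof.
rewrite /Jd.
move=> [f [If [sf cf]]] [g [Ig [sg cg]]]; exists (f + g); split; first exact: ID.
by rewrite coefD cf cg; split => //; apply: leq_trans (size_polyD _ _) _; rewrite geq_max sf sg.
Qed.
Let JdM d a x : Jd d x -> Jd d (a * x).
Proof.
rewrite /Jd => -[f [If [sf cf]]]; exists (a%:P * f); split; first exact: IM.
rewrite coefCM cf; split => //; apply/leq_sizeP => j hj.
by rewrite coefCM (leq_sizeP _ _ sf) ?mulr0.
Qed.
Let JdS d c : Jd d c -> Jd d.+1 c.
Proof.
rewrite /Jd => -[f [If [sf cf]]]; exists (f * 'X); split; first by rewrite mulrC; exact: IM.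
rewrite coefMX /= cf; split => //; apply/leq_sizeP => j hj.
rewrite coefMX; case: j hj => //= j hj; exact: (leq_sizeP _ _ sf).
Qed.
Let Jdle d d' c : (d <= d')%N -> Jd d c -> Jd d' c.
Proof. move=> /subnK <-; elim: (d' - d)%N => // k IH H; rewrite addSn; exact/JdS/IH. Qed.
Let Jdgen d L c : (forall l, l \in L -> Jd d l) -> gen L c -> Jd d c.
Proof. by move=> HL; apply: (@genI _ L (Jd d)); [exact: Jd0|exact: JdD|exact: JdM|exact: HL]. Qed.

Let J c := exists d, Jd d c.

Let JD : exists D, forall c, J c -> Jd D c.
Proof.
have [L [HL GL]] := HA J.
have [D HD] : exists D, forall l, l \in L -> Jd D l.
  elim: L HL {GL} => [|a L IH] HL; first by exists 0%N.
  have [|D HD] := IH; first by move=> l Hl; apply: HL; rewrite inE Hl orbT.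
  have [d Hd] := HL a (mem_head _ _).
  exists (maxn d D) => l; rewrite inE => /orP [/eqP ->|/HD H].
    exact: (Jdle (leq_maxl d D) Hd).
  exact: (Jdle (leq_maxr d D) H).
by exists D => c /GL; apply: Jdgen.
Qed.

Let Q (F : seq {poly A}) (d : nat) (c : A) := exists g : {poly A}, gen F g /\ (size g <= d.+1)%N /\ g`_d = c.

Let Qsub F F' d c : {subset F <= F'} -> Q F d c -> Q F' d c.
Proof. by move=> HF [g [Hg Hs]]; exists g; split => //; apply: gen_sub Hg. Qed.

Let Qd d : exists F, (forall f, f \in F -> I f) /\ forall c, Jd d c -> Q F d c.
Proof.
have [L [HL GL]] := HA (Jd d).
have [F [F1 F2]] := fin_choice (P := fun l f => I f /\ (size f <= d.+1)%N /\ f`_d = l) HL.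
exists F; split; first by move=> f /F1 [l []].
move=> c /GL; apply: (@genI _ L (Q F d)).
- by exists 0; rewrite size_poly0 coef0; split => //; exact: gen0.
- move=> x y [g [Hg [sg cg]]] [h [Hh [sh ch]]]; exists (g + h); split; first exact: gen_add.
  by rewrite coefD cg ch; split => //; apply: leq_trans (size_polyD _ _) _; rewrite geq_max sg sh.
- move=> a x [g [Hg [sg cg]]]; exists (a%:P * g); split; first exact: gen_mul.
  rewrite coefCM cg; split => //; apply/leq_sizeP => j hj.
  by rewrite coefCM (leq_sizeP _ _ sg) ?mulr0.
- move=> l /F2 [f [Hf [_ Hf2]]]; exists f; split => //; exact: gen_mem.
Qed.

Let QD D : exists F, (forall f, f \in F -> I f) /\ forall d c, (d <= D)%N -> Jd d c -> Q F d c.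
Proof.
elim: D => [|D [F [HF QF]]].
  have [F [HF QF]] := Qd 0; exists F; split => // d c; rewrite leqn0 => /eqP ->; exact: QF.
have [F' [HF' QF']] := Qd D.+1; exists (F ++ F'); split.
  by move=> f; rewrite mem_cat => /orP [/HF|/HF'].
move=> d c; rewrite leq_eqVlt => /orP [/eqP ->|hd] Hc.
  by apply: Qsub (QF' _ Hc) => f Hf; rewrite mem_cat Hf orbT.
by apply: Qsub (QF _ _ hd Hc) => f Hf; rewrite mem_cat Hf.
Qed.

Lemma size_drop_coef (p : {poly A}) m : (size p <= m.+1)%N -> p`_m = 0 -> (size p <= m)%N.
Proof.
move=> /leq_sizeP H0 H1; apply/leq_sizeP => j; rewrite leq_eqVlt => /orP [/eqP <-|] //.
exact: H0.
Qed.

Lemma hilbert_step : exists L, (forall l, l \in L -> S l) /\ forall s, S s -> gen L s.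
Proof.
have [D HD] := JD; have [F [HF QF]] := QD D.
have key : forall m (f : {poly A}), (size f <= m)%N -> I f -> gen F f.
  elim=> [|m IH] f sf If.
    by move: sf; rewrite leqn0 size_poly_eq0 => /eqP ->; exact: gen0.
  have [g [Hg [sg cg]]] : exists g, gen F g /\ (size g <= m.+1)%N /\ g`_m = f`_m.
    have [hm|hm] := leqP m D.
      by apply: QF => //; exists f.
    have [g [Hg [sg cg]]] := QF D (f`_m) (leqnn _) (HD _ (ex_intro _ m (ex_intro _ f (conj If (conj sf erefl))))).
    exists ('X^(m - D) * g); split; first exact: gen_mul.
    rewrite coefXnM ltnNge leq_subr /= subKn ?cg ?(ltnW hm) //; split => //.
    apply/leq_sizeP => j hj; rewrite coefXnM; case: ifP => // hj2.
    apply: (leq_sizeP _ _ sg); move: hj2 hj hm; clear; lia.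
  have -> : f = (f - g) + g by rewrite subrK.
  apply: gen_add => //; apply: IH.
    apply: size_drop_coef; last by rewrite coefB cg subrr.
    by apply: leq_trans (size_polyD _ _) _; rewrite size_polyN geq_max sf sg.
  apply: ID => //; rewrite -mulN1r; apply: IM; exact: Igen Hg.
have [L [HL GL]] : exists L, (forall l, l \in L -> S l) /\ forall f, f \in F -> gen L f.
  elim: F HF {QF key} => [|a F IH] HF; first by exists [::].
  have [|L [HL GL]] := IH; first by move=> f Hf; apply: HF; rewrite inE Hf orbT.
  have [La [HLa GLa]] := HF a (mem_head _ _).
  exists (La ++ L); split; first by move=> l; rewrite mem_cat => /orP [/HLa|/HL].
  move=> f; rewrite inE => /orP [/eqP ->|/GL H]; [apply: (gen_sub _ GLa) | apply: (gen_sub _ H)];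
    by move=> l Hl; rewrite mem_cat Hl ?orbT.
exists L; split => // s Ss; apply: gen_trans GL _; apply: (key (size s)) => //.
exists [:: s]; split; first by move=> l; rewrite inE => /eqP ->.
exact: gen_mem (mem_head _ _).
Qed.
End Hilbert.

Lemma Noeth_poly (A : comNzRingType) : Noeth A -> Noeth {poly A}.
Proof. move=> HA S; exact: hilbert_step. Qed.

Section MP.
Variable R : fieldType.
Fixpoint mp (n : nat) : comNzRingType :=
  if n is n'.+1 then ({poly mp n'} : comNzRingType) else (R : comNzRingType).

Section Ev.
Variable v : nat -> R.
Fixpoint evm (n : nat) : {rmorphism mp n -> R} :=
  match n return {rmorphism mp n -> R} with
  | 0 => (GRing.RMorphism.clone _ _ (@idfun R) _)
  | n'.+1 => (GRing.RMorphism.clone _ _ (horner_morph (fun a : mp n' => mulrC (v n') (evm n' a))) _)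
  end.

Fixpoint cstm (n : nat) (c : R) : mp n :=
  match n return mp n with 0 => c | n'.+1 => (cstm n' c)%:P end.
Fixpoint varm (n : nat) (i : nat) : mp n :=
  match n return mp n with 0 => 0 | n'.+1 => if i == n' then 'X else (varm n' i)%:P end.

Lemma evm_cst n c : evm n (cstm n c) = c.
Proof. elim: n => //= n IH; rewrite /horner_morph map_polyC hornerC; exact: IH. Qed.

Lemma evm_var n i : (i < n)%N -> evm n (varm n i) = v i.
Proof.
elim: n => //= n IH hi; rewrite /horner_morph; case: eqP => [->|ne].
  by rewrite map_polyX hornerX.
rewrite map_polyC hornerC; apply: IH; move: hi ne; clear; lia.
Qed.
End Ev.

Lemma Noeth_mp n : Noeth (mp n).
Proof. elim: n => [|n IH]; [exact: Noeth_field | exact: Noeth_poly]. Qed.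

Lemma zariski_noeth (T : Type) (E : T -> nat -> R) (n : nat) (S : (T -> R) -> Prop) :
  (forall p, S p -> exists P : mp n, forall x, p x = evm (E x) n P) ->
  exists k (L : 'I_k -> T -> R), (forall i, S (L i)) /\
    forall x, (forall i, L i x = 0) -> forall p, S p -> p x = 0.
Proof.
move=> HS.
have [L' [HL GL]] := @Noeth_mp n (fun P => S (fun x => evm (E x) n P)).
exists (size L'), (fun i x => evm (E x) n (nth 0 L' i)); split.
  by move=> i; apply: HL; rewrite mem_nth.
move=> x Hx p Sp; have [P HP] := HS p Sp.
have eP : p = (fun x => evm (E x) n P) by apply: funext.
rewrite HP; rewrite eP in Sp; have := GL _ Sp.
apply: (@genI _ L' (fun P => evm (E x) n P = 0)).
- exact: rmorph0.
- by move=> a b ha hb; rewrite rmorphD ha hb addr0.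
- by move=> a b hb; rewrite rmorphM hb mulr0.
- move=> l Hl; rewrite -(nth_index 0 Hl); have hi : (index l L' < size L')%N by rewrite index_mem.
  have := Hx (Ordinal hi).
  by [].
Qed.
End MP.

Section Temp.
Variable R : realType.
Variable n : nat.

Lemma lsub_evec_l (j : 'I_n) : lsubmx (evec R (lshift 1 j)) = evec R j.
Proof. by apply/matrixP => a b; rewrite !mxE /= (inj_eq (@lshift_inj _ _)). Qed.

Lemma lsub_evec_r (k : 'I_1) : lsubmx (evec R (rshift n k)) = 0.
Proof.
apply/matrixP => a b; rewrite !mxE /=.
by rewrite eq_lrshift andbF.
Qed.

Lemma enorm_ge0 m (x : 'rV[R]_m) : 0 <= enorm x.
Proof. exact: sqrtr_ge0. Qed.

Lemma enorm_lsub (x : 'rV[R]_(n + 1)) : enorm (lsubmx x) <= enorm x.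
Proof.
rewrite /enorm; apply: ler_wsqrtr; rewrite big_split_ord /=.
have -> : \sum_(i < n) lsubmx x ord0 i ^+ 2 = \sum_(i < n) x ord0 (lshift 1 i) ^+ 2.
  by apply: eq_bigr => i _; rewrite mxE.
by rewrite lerDl; apply: sumr_ge0 => i _; exact: sqr_ge0.
Qed.

Lemma partial_lsub (G : 'rV[R]_n -> R) (i : 'I_(n + 1)) :
  (exists j, partial i (fun x => G (lsubmx x)) = (fun x => partial j G (lsubmx x)) /\
     forall x, (fun h : R => G (lsubmx (x + h *: evec R i))) = (fun h => G (lsubmx x + h *: evec R j)))
  \/ (forall x, (fun h : R => G (lsubmx (x + h *: evec R i))) = (fun h => G (lsubmx x))).
Proof.
case: (splitP i) => [j hj|k hk].
  have -> : i = lshift 1 j by apply/val_inj.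
  left; exists j.
2: have -> : i = rshift n k by apply/val_inj.
2: right.
  have E : forall x, (fun h : R => G (lsubmx (x + h *: evec R (lshift 1 j)))) = (fun h => G (lsubmx x + h *: evec R j)).
    by move=> x; apply: funext => h; rewrite linearD linearZ /= lsub_evec_l.
  split => //; apply: funext => x; rewrite /partial; by rewrite E.
by move=> x; apply: funext => h; rewrite linearD linearZ /= lsub_evec_r scaler0 addr0.
Qed.

Lemma iter_lsub (F : 'rV[R]_n -> R) (s : seq 'I_(n + 1)) :
  (exists s', iter_partial s (fun x => F (lsubmx x)) = (fun x => iter_partial s' F (lsubmx x)))
  \/ iter_partial s (fun x => F (lsubmx x)) = (fun _ => 0).
Proof.
elim: s => [|i s [[s' E]|E]]; first by left; exists [::].
  rewrite /= E; case: (partial_lsub (iter_partial s' F) i) => [[j [E1 _]]|E2].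
    by left; exists (j :: s'); rewrite E1.
  right; apply: funext => x; rewrite /partial E2; exact: derive1_cst.
right; rewrite /= E; apply: funext => x; rewrite /partial; exact: derive1_cst.
Qed.

Lemma tempered_lsub (F : 'rV[R]_n -> R) : tempered_Rn F ->
  tempered_Rn (fun x : 'rV[R]_(n + 1) => F (lsubmx x)).
Proof.
move=> [sF bF]; split.
  move=> s; case: (iter_lsub F s) => [[s' E]|E]; rewrite E; split.
  - move=> x e e0; have [d [d0 Hd]] := (sF s').1 (lsubmx x) e e0.
    exists d; split => // y hy; apply: Hd; rewrite -linearB.
    exact: le_lt_trans (enorm_lsub _) hy.
  - move=> i x; case: (partial_lsub (iter_partial s' F) i) => [[j [_ E1]]|E2].
      rewrite (E1 x); exact: (sF s').2.
    rewrite (E2 x); exact: derivable_cst.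
  - by move=> x e e0; exists 1; split => // y _; rewrite subrr normr0.
  - by move=> i x; exact: derivable_cst.
move=> s; case: (iter_lsub F s) => [[s' E]|E]; rewrite E.
  have [C [N HC]] := bF s'; exists C, N => x.
  have C0 : 0 <= C.
    have := HC 0; have : 0 < (1 + enorm (0 : 'rV[R]_n) ^+ 2) ^+ N.
      by apply: exprn_gt0; apply: ltr_wpDr; [exact: sqr_ge0 | exact: ltr01].
    move=> hp hb; have := le_trans (normr_ge0 _) hb.
    by rewrite pmulr_lge0.
  apply: le_trans (HC _) _; apply: ler_wpM2l => //.
  apply: lerXn2r; rewrite ?nnegrE; try (apply: addr_ge0 => //; exact: sqr_ge0).
  rewrite lerD2l; apply: lerXn2r; rewrite ?nnegrE ?enorm_ge0 //; exact: enorm_lsub.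
by exists 0, 0%N => x; rewrite normr0 mul0r.
Qed.
End Temp.

Section PolyLemmas.
Variable R : realType.

Lemma polyfun_pow n (p : 'rV[R]_n -> R) k : polyfun p -> polyfun (fun x => p x ^+ k).
Proof.
move=> hp; elim: k => [|k IH]; first exact: polyfun_cst.
have -> : (fun x => p x ^+ k.+1) = (fun x => p x * p x ^+ k) by apply: funext => x; rewrite exprS.
exact: polyfun_mul.
Qed.

Lemma polyfun_lsub n (p : 'rV[R]_n -> R) : polyfun p -> polyfun (fun z : 'rV[R]_(n + 1) => p (lsubmx z)).
Proof.
elim=> [c|i|p1 p2 _ h1 _ h2|p1 p2 _ h1 _ h2]; first exact: polyfun_cst.
- have -> : (fun z : 'rV[R]_(n + 1) => lsubmx z ord0 i) = (fun z => z ord0 (lshift 1 i)).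
    by apply: funext => z; rewrite mxE.
  exact: polyfun_coord.
- exact: polyfun_add.
- exact: polyfun_mul.
Qed.
End PolyLemmas.

Section Chart.
Variables (R : realType) (X : Type) (opens : set (set X)) (O : set X -> set (X -> R)).
Variables (U : set X) (n : nat) (Y : set 'rV[R]_n) (phi : X -> 'rV[R]_n).
Hypothesis Hc : affine_chart opens O U Y phi.
Variable q : 'rV[R]_n -> R.
Hypothesis hq : polyfun q.

Definition emb (y : 'rV[R]_n) : 'rV[R]_(n + 1) := row_mx y (const_mx (q y)^-1).
Definition zl (z : 'rV[R]_(n + 1)) : R := z ord0 (rshift n ord0).
Definition Y' : set 'rV[R]_(n + 1) := fun z => Y (lsubmx z) /\ q (lsubmx z) * zl z = 1.
Definition U' : set X := fun x => U x /\ q (phi x) != 0.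
Definition psi (x : X) := emb (phi x).

Lemma lsub_emb y : lsubmx (emb y) = y.
Proof. exact: row_mxKl. Qed.

Lemma zl_emb y : zl (emb y) = (q y)^-1.
Proof. by rewrite /zl /emb row_mxEr mxE. Qed.

Lemma Y'_emb y : Y y -> q y != 0 -> Y' (emb y).
Proof. by move=> hy hqy; split; rewrite lsub_emb // zl_emb mulfV. Qed.

Lemma Y'_q z : Y' z -> q (lsubmx z) != 0.
Proof. by move=> [_ h]; apply/eqP => h0; move: h; rewrite h0 mul0r => /eqP; rewrite eq_sym oner_eq0. Qed.

Lemma Y'_eq z : Y' z -> z = emb (lsubmx z).
Proof.
move=> hz; have hq0 := Y'_q hz; have [_ h] := hz.
rewrite -[z in LHS]hsubmxK /emb; congr row_mx.
apply/matrixP => a b; rewrite !ord1 !mxE.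
by apply: (mulfI hq0); rewrite -[X in _ * X = _]/(zl z) h mulfV.
Qed.

Lemma dehom (p : 'rV[R]_(n + 1) -> R) : polyfun p ->
  exists N (p' : 'rV[R]_n -> R), polyfun p' /\
    forall y, q y != 0 -> p' y = q y ^+ N * p (emb y).
Proof.
elim=> [c|i|p1 p2 _ [N1 [r1 [h1 e1]]] _ [N2 [r2 [h2 e2]]]|p1 p2 _ [N1 [r1 [h1 e1]]] _ [N2 [r2 [h2 e2]]]].
- by exists 0%N, (fun _ => c); split; [exact: polyfun_cst|move=> y _; rewrite mul1r].
- case: (splitP i) => [j hj|k hk].
    have -> : i = lshift 1 j by apply/val_inj.
    exists 0%N, (fun y => y ord0 j); split; first exact: polyfun_coord.
    by move=> y _; rewrite mul1r /emb row_mxEl.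
  have -> : i = rshift n k by apply/val_inj.
  exists 1%N, (fun _ => 1); split; first exact: polyfun_cst.
  by move=> y hy; rewrite /emb row_mxEr mxE expr1 mulfV.
- exists (N1 + N2)%N, (fun y => q y ^+ N2 * r1 y + q y ^+ N1 * r2 y); split.
    by apply: polyfun_add; apply: polyfun_mul => //; exact: polyfun_pow.
  by move=> y hy; rewrite e1 // e2 // exprD; ring.
- exists (N1 + N2)%N, (fun y => r1 y * r2 y); split; first exact: polyfun_mul.
  by move=> y hy; rewrite e1 // e2 // exprD; ring.
Qed.

Lemma alg_Y' : algebraic_set Y -> algebraic_set Y'.
Proof.
move=> [S [HS eY]].
exists (fun p => (exists2 s, S s & p = (fun z => s (lsubmx z))) \/
   p = (fun z => q (lsubmx z) * zl z - 1)); split.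
  move=> p [[s Ss ->]|->]; first exact/polyfun_lsub/HS.
  apply: polyfun_add; last exact: polyfun_cst.
  apply: polyfun_mul; first exact: polyfun_lsub.
  exact: polyfun_coord.
apply: funext => z; rewrite /Y' eY; apply: propext; split.
  move=> [h1 h2] p [[s Ss ->]|->]; first exact: h1.
  by rewrite h2 subrr.
move=> h; split.
  by move=> s Ss; apply: (h (fun z => s (lsubmx z))); left; exists s.
by apply/eqP; rewrite -subr_eq0; apply/eqP; apply: (h (fun z => q (lsubmx z) * zl z - 1)); right.
Qed.

Lemma zB (W0 : set 'rV[R]_n) : zopen_in Y W0 ->
  zopen_in Y' (Y' `&` (fun z => W0 (lsubmx z))).
Proof.
move=> [S [HS ->]].
exists (fun p => exists2 s, S s & p = (fun z => s (lsubmx z))); split.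
  by move=> p [s Ss ->]; apply/polyfun_lsub/HS.
apply: funext => z; apply: propext; split.
  move=> [hz [_ hn]]; split => // hZ; apply: hn => s Ss.
  by apply: (hZ (fun z => s (lsubmx z))); exists s.
move=> [hz hn]; split => //; split; first exact: hz.1.
by move=> hZ; apply: hn => p [s Ss ->]; exact: hZ.
Qed.

Lemma zC (W1 : set 'rV[R]_(n + 1)) : zopen_in Y' W1 ->
  zopen_in Y (Y `&` [set y | q y != 0] `&` (fun y => W1 (emb y))).
Proof.
move=> [S [HS ->]].
exists (fun r => exists p N p', [/\ S p, polyfun p',
   (forall y, q y != 0 -> p' y = q y ^+ N * p (emb y)) & r = (fun y => q y * p' y)]); split.
  by move=> r [p [N [p' [_ hp' _ ->]]]]; exact: polyfun_mul.
apply: funext => y; apply: propext; split.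
  move=> [[hy hqy] [_ hn]]; split => // hZ; apply: hn => p Sp.
  have [N [p' [hp' ep']]] := dehom (HS _ Sp).
  have := hZ (fun y => q y * p' y); rewrite ep' //.
  move=> /(_ (ex_intro _ p (ex_intro _ N (ex_intro _ p' (And4 Sp hp' ep' erefl))))) /eqP.
  rewrite mulf_eq0 (negbTE hqy) /= mulf_eq0 expf_eq0 (negbTE hqy) andbF /=.
  by move/eqP.
move=> [hy hn].
have [r [[p [N [p' [Sp hp' ep' ->]]]] hr]] : exists r, (exists p N p', [/\ S p, polyfun p',
   (forall y, q y != 0 -> p' y = q y ^+ N * p (emb y)) & r = (fun y => q y * p' y)]) /\ r y != 0.
  apply: contra_notP hn => hn r Sr; apply/eqP; apply: contra_notT hn => hr; exists r; split => //.
have hqy : q y != 0 by apply: contraNneq hr => ->; rewrite mul0r.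
split; first by split.
split; first exact: Y'_emb.
move=> hZ; move: hr; rewrite ep' // hZ // mulr0 mulr0; by rewrite eqxx.
Qed.

Lemma imA (W : set X) : W `<=` U' -> psi @` W = Y' `&` (fun z => (phi @` W) (lsubmx z)).
Proof.
move=> WU; have [_ [maps inj] surj _ _] := Hc.
apply: funext => z; apply: propext; split.
  move=> [x Wx <-]; have [hU hqx] := WU _ Wx; split; first exact: Y'_emb (maps _ hU) hqx.
  by exists x => //; rewrite /psi lsub_emb.
by move=> [hz [x Wx ex]]; exists x => //; rewrite /psi ex; symmetry; exact: Y'_eq.
Qed.

Lemma imA' (W : set X) : W `<=` U' ->
  phi @` W = Y `&` [set y | q y != 0] `&` (fun y => (psi @` W) (emb y)).
Proof.
move=> WU; have [_ [maps inj] surj _ _] := Hc.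
apply: funext => y; apply: propext; split.
  move=> [x Wx <-]; have [hU hqx] := WU _ Wx; split; first by split => //; exact: maps.
  by exists x.
move=> [[hy hqy] [x Wx ex]]; exists x => //.
by have := congr1 lsubmx ex; rewrite /psi !lsub_emb.
Qed.

Lemma subchart : opens U' /\ affine_chart opens O U' Y' psi.
Proof.
have [alg [maps inj] surj homeo sheaf] := Hc.
have U'U : U' `<=` U by move=> x [].
split.
  apply/(homeo _ U'U); exists (fun p => p = q); split; first by move=> p ->.
  apply: funext => y; apply: propext; split.
    move=> [x [hU hqx] <-]; split; first exact: maps.
    by move=> hZ; move: hqx; rewrite (hZ q erefl) eqxx.
  move=> [hy hn]; have [x hU ex] := surj _ hy; exists x => //; split => //.
  by rewrite ex; apply/eqP => h0; apply: hn => p ->.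
split.
- exact: alg_Y'.
- split; first by move=> x [hU hqx]; exact: Y'_emb (maps _ hU) hqx.
  move=> x y [hx _] [hy _] e; apply: inj => //.
  by have := congr1 lsubmx e; rewrite /psi !lsub_emb.
- move=> z hz; have [x hU ex] := surj _ hz.1; exists x.
    by split => //; rewrite ex; exact: Y'_q.
  by rewrite /psi ex; symmetry; exact: Y'_eq.
- move=> W WU; have WU0 : W `<=` U by move=> x /WU /U'U.
  rewrite (homeo _ WU0); split.
    by move=> /zB; rewrite -imA.
  by move=> /zC; rewrite -imA'.
- move=> W WU oW f; have WU0 : W `<=` U by move=> x /WU /U'U.
  rewrite (sheaf _ WU0 oW f); split.
    move=> [g [rg fg]]; exists (fun z => g (lsubmx z)); split; last first.
      by move=> x Wx; rewrite fg // /psi lsub_emb.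
    move=> z; rewrite (imA WU) => -[hz [x Wx ex]].
    have [W0 [[zW0 W0y W0s] [p [r [hp hr hpr]]]]] := rg _ (ex_intro2 _ _ x Wx ex).
    exists (Y' `&` (fun z => W0 (lsubmx z))); split; first split.
    + exact: zB.
    + by split.
    + by move=> z' [hz' /W0s h]; split.
    exists (fun z => p (lsubmx z)), (fun z => r (lsubmx z)); split; try exact: polyfun_lsub.
    by move=> z' [_ /hpr].
  move=> [g' [rg fg]]; exists (fun y => g' (emb y)); split; last first.
    by move=> x Wx; rewrite fg.
  move=> y; rewrite (imA' WU) => -[[hy hqy] hey].
  have [W1 [[zW1 W1y W1s] [p [r [hp hr hpr]]]]] := rg _ hey.
  exists (Y `&` [set y | q y != 0] `&` (fun y => W1 (emb y))); split; first split.
  + exact: zC.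
  + by split.
  + by move=> y' [[hy' hqy'] /W1s h]; split.
  have [Np [p' [hp' ep']]] := dehom hp; have [Nr [r' [hr' er']]] := dehom hr.
  exists (fun y => q y ^+ Nr * p' y), (fun y => q y ^+ Np * r' y); split.
  + by apply: polyfun_mul => //; exact: polyfun_pow.
  + by apply: polyfun_mul => //; exact: polyfun_pow.
  move=> y' [[hy' hqy'] hW1]; have [hr0 ->] := hpr _ hW1.
  rewrite ep' // er' //; split.
    by rewrite !mulf_neq0 // expf_neq0.
  by field; rewrite hr0 !expf_neq0.
Qed.
End Chart.

Lemma sub_tempered (R : realType) (X : Type) (opens : set (set X)) (O : set X -> set (X -> R))
  (U : set X) (n : nat) (Y : set 'rV[R]_n) (phi : X -> 'rV[R]_n) (q : 'rV[R]_n -> R)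
  (F : 'rV[R]_n -> R) (t : X -> R) :
  affine_chart opens O U Y phi -> polyfun q -> tempered_Rn F ->
  (forall x, U x -> t x = F (phi x)) ->
  affine_open opens O [set x | U x /\ q (phi x) != 0] /\
  tempered_affine opens O [set x | U x /\ q (phi x) != 0] t.
Proof.
move=> ch hq tF eF; have [oU' ch'] := subchart ch hq.
split; first by split => //; exists (n + 1)%N, (Y' Y q), (psi phi q).
exists (n + 1)%N, (Y' Y q), (psi phi q); split => //.
exists (fun z => F (lsubmx z)); split; first exact: tempered_lsub.
by move=> x [hU _]; rewrite eF // /psi lsub_emb.
Qed.

Definition vx (R : realType) n (x : 'rV[R]_n) (i : nat) : R :=
  oapp (fun j : 'I_n => x ord0 j) 0 (insub i).

Lemma polyfun_repr (R : realType) n (p : 'rV[R]_n -> R) : polyfun p ->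
  exists P : mp R n, forall x, p x = evm (vx x) n P.
Proof.
elim=> [c|i|p1 p2 _ [P1 e1] _ [P2 e2]|p1 p2 _ [P1 e1] _ [P2 e2]].
- by exists (cstm n c) => x; rewrite evm_cst.
- exists (varm R n i) => x; rewrite evm_var //.
  by rewrite /vx valK.
- by exists (P1 + P2) => x; rewrite rmorphD e1 e2.
- by exists (P1 * P2) => x; rewrite rmorphM e1 e2.
Qed.

Definition Fam (X : Type) (P : set X -> Prop) (W : set X) :=
  exists k (B : 'I_k -> set X), (forall i, P (B i)) /\ \bigcup_i B i = W.

Lemma Fam_mono X (P Q : set X -> Prop) W : (forall B, P B -> Q B) -> Fam P W -> Fam Q W.
Proof. by move=> PQ [k [B [HB eB]]]; exists k, B; split => // i; apply: PQ. Qed.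

Lemma Fam0 X (P : set X -> Prop) : Fam P set0.
Proof.
exists 0%N, (fun _ => set0); split => [[]//|].
by apply: funext => x; apply: propext; split => [[[]]|].
Qed.

Lemma FamU X (P : set X -> Prop) W1 W2 : Fam P W1 -> Fam P W2 -> Fam P (W1 `|` W2).
Proof.
move=> [k1 [B1 [H1 e1]]] [k2 [B2 [H2 e2]]].
exists (k1 + k2)%N, (fun l => match fintype.split l with inl i => B1 i | inr j => B2 j end); split.
  by move=> l; case: (fintype.split l).
rewrite -e1 -e2; apply: funext => x; apply: propext; split.
  by move=> [l _]; case: (fintype.split l) => [i|j] h; [left; exists i|right; exists j].
move=> [[i _ h]|[j _ h]].
  by exists (lshift k2 i) => //; rewrite (unsplitK (inl i : 'I_k1 + 'I_k2)).
by exists (rshift k1 j) => //; rewrite (unsplitK (inr j : 'I_k1 + 'I_k2)).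
Qed.

Lemma Fam_big X (P : set X -> Prop) k (V : 'I_k -> set X) :
  (forall i, Fam P (V i)) -> Fam P (\bigcup_i V i).
Proof.
elim: k V => [|k IH] V HV.
  have -> : \bigcup_i V i = set0 by apply: funext => x; apply: propext; split => [[[]]|].
  exact: Fam0.
have -> : \bigcup_i V i = V ord0 `|` \bigcup_i V (lift ord0 i).
  apply: funext => x; apply: propext; split.
    by move=> [i _]; case: (unliftP ord0 i) => [j ->|->] h; [right; exists j|left].
  by move=> [h|[j _ h]]; [exists ord0|exists (lift ord0 j)].
apply: FamU => //; exact: IH.
Qed.

Lemma tempered_FamE (R : realType) X (opens : set (set X)) (O : set X -> set (X -> R)) (V : set X) (t : X -> R) :
  tempered_on opens O V t <->
  Fam (fun B => affine_open opens O B /\ B `<=` V /\ tempered_affine opens O B t) V.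
Proof.
split.
  by move=> [k [B [h1 h2 h3 h4]]]; exists k, B; split.
by move=> [k [B [h e]]]; exists k, B; split => // i; have [? [? ?]] := h i.
Qed.

Lemma noeth_poly_set (R : realType) n (S : ('rV[R]_n -> R) -> Prop) :
  (forall p, S p -> polyfun p) ->
  exists k (L : 'I_k -> 'rV[R]_n -> R), (forall i, S (L i)) /\
    forall y, (forall i, L i y = 0) -> forall p, S p -> p y = 0.
Proof.
move=> HS; apply: (@zariski_noeth R _ (@vx R n)) => p /HS; exact: polyfun_repr.
Qed.

Lemma piece (R : realType) (X : Type) (opens : set (set X)) (O : set X -> set (X -> R))
  (U : set X) n (Y : set 'rV[R]_n) (phi : X -> 'rV[R]_n) (F : 'rV[R]_n -> R) (t : X -> R)
  (W : set X) :
  affine_chart opens O U Y phi -> tempered_Rn F -> (forall x, U x -> t x = F (phi x)) ->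
  W `<=` U -> opens W ->
  Fam (fun B => affine_open opens O B /\ B `<=` W /\ tempered_affine opens O B t) W.
Proof.
move=> ch tF eF WU oW; have [alg [maps inj] surj homeo sheaf] := ch.
have [S [HS eW]] := (homeo _ WU).1 oW.
have [k [L [SL NZ]]] := noeth_poly_set HS.
exists k, (fun j => [set x | U x /\ L j (phi x) != 0]); split.
  move=> j; have [h1 h2] := sub_tempered ch (HS _ (SL j)) tF eF; split => //; split => //.
  move=> x [hU hL]; have : (phi @` W) (phi x).
    rewrite eW; split; first exact: maps.
    by move=> hZ; move: hL; rewrite hZ ?eqxx.
  by move=> [x' Wx' e]; rewrite -(inj _ _ (WU _ Wx') hU e).
apply: funext => x; apply: propext; split.
  move=> [j _ [hU hL]]; have : (phi @` W) (phi x).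
    rewrite eW; split; first exact: maps.
    by move=> hZ; move: hL; rewrite hZ ?eqxx.
  by move=> [x' Wx' e]; rewrite -(inj _ _ (WU _ Wx') hU e).
move=> Wx; have : (phi @` W) (phi x) by exists x.
rewrite eW => -[hY hn].
have [j hj] : exists j, L j (phi x) != 0.
  apply: contra_notP hn => hn; apply: NZ => j; apply/eqP; apply: contra_notT hn => h; by exists j.
by exists j => //; split => //; exact: WU.
Qed.

Lemma qc (R : realType) (X : Type) (opens : set (set X)) (O : set X -> set (X -> R))
  (A : set X) n (Y : set 'rV[R]_n) (phi : X -> 'rV[R]_n) (C : set X -> Prop) (V : set X) :
  affine_chart opens O A Y phi ->
  (forall B, C B -> opens (B `&` A)) ->
  (forall x, A x -> V x -> exists2 B, C B & B x) ->
  exists m (Bs : 'I_m -> set X), (forall l, C (Bs l)) /\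
    forall x, A x -> V x -> exists l, Bs l x.
Proof.
move=> ch oBA cov; have [alg [maps inj] surj homeo sheaf] := ch.
pose S := fun p => exists B, C B /\ exists S0 : ('rV[R]_n -> R) -> Prop,
  [/\ (forall s, S0 s -> polyfun s), phi @` (B `&` A) = Y `&` ~` zero_locus S0 & S0 p].
have HS : forall p, S p -> polyfun p by move=> p [B [_ [S0 [h _ h']]]]; exact: h.
have [k [L [SL NZ]]] := noeth_poly_set HS.
have [Bs HBs] := choice SL.
exists k, Bs; split; first by move=> l; have [] := HBs l.
move=> x hA hV; have [B CB Bx] := cov x hA hV.
have BAA : B `&` A `<=` A by move=> ? [].
have [S0 [HS0 e0]] := (homeo _ BAA).1 (oBA _ CB).
have : (phi @` (B `&` A)) (phi x) by exists x.
rewrite e0 => -[_ hn].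
have [p S0p hp] : exists2 p, S0 p & p (phi x) != 0.
  apply: contra_notP hn => hn p S0p; apply/eqP; apply: contra_notT hn => h; by exists p.
have Sp : S p by exists B; split => //; exists S0; split.
have [l hl] : exists l, L l (phi x) != 0.
  case: (pselect (exists l, L l (phi x) != 0)) => // N; exfalso; move/eqP: hp; apply.
  apply: NZ Sp => l; apply/eqP; apply: contra_notT N => h; by exists l.
exists l; have [_ [S1 [_ e1 S1l]]] := HBs l.
have : (phi @` (Bs l `&` A)) (phi x).
  rewrite e1; split; first exact: maps.
  by move=> hZ; move: hl; rewrite hZ ?eqxx.
by move=> [x' [Bx' Ax'] e]; rewrite -(inj _ _ Ax' hA e).
Qed.

Unset Implicit Arguments.

Theorem proposition5p11 (R : realType) (X : Type) (opens : set (set X))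
    (O : set X -> set (X -> R)) :
  algebraic_variety opens O ->
  (* presheaf: restriction maps T(V) -> T(U) for Zariski opens U ⊆ V *)
  (forall (U V : set X) (t : X -> R), opens U -> opens V -> U `<=` V ->
     tempered_on opens O V t -> tempered_on opens O U t) /\
  (* gluing: compatible sections on an open cover glue to a section *)
  (forall (V : set X) (J : Type) (W : J -> set X),
     opens V -> (forall j, opens (W j)) -> \bigcup_j W j = V ->
     forall s : J -> X -> R,
       (forall j, tempered_on opens O (W j) (s j)) ->
       (forall i j x, W i x -> W j x -> s i x = s j x) ->
       exists t : X -> R, tempered_on opens O V t /\
         (forall j x, W j x -> t x = s j x)).
Proof.
move=> HX; have [[opT op0 opI opU] sheafX [k [A [affA covA]]]] := HX.
split.
  move=> U V t oU oV UV /tempered_FamE [m [Ui [HUi covUi]]]; apply/tempered_FamE.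
  have eU : U = \bigcup_i (U `&` Ui i).
    apply: funext => x; apply: propext; split.
      by move=> hx; have := UV _ hx; rewrite -covUi => -[i _ h]; exists i.
    by move=> [i _ []].
  rewrite [X in Fam _ X]eU; apply: Fam_big => i.
  have [affi [subi tempi]] := HUi i; have [n [Y [phi [ch [F [tF eF]]]]]] := tempi.
  apply: Fam_mono (piece ch tF eF _ _).
  - by move=> B [h1 [h2 h3]]; split => //; split => // x /h2 [].
  - by move=> x [].
  - by apply: opI => //; exact: affi.1.
move=> V J W oV oW covW s ts comp.
pose t x := if pselect (exists j, W j x) is left e then s (projT1 (cid e)) x else 0.
have et : forall j x, W j x -> t x = s j x.
  move=> j x h; rewrite /t; case: pselect => [e|N]; last by exfalso; apply: N; exists j.
  exact: comp (projT2 (cid e)) h.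
exists t; split => //; apply/tempered_FamE.
pose C := fun B => affine_open opens O B /\ B `<=` V /\ tempered_affine opens O B t.
have covC : forall x, V x -> exists2 B, C B & B x.
  move=> x; rewrite -covW => -[j _ Wjx].
  have [kk [B [HB eB]]] := (tempered_FamE _ _ _ _).1 (ts j).
  have : (\bigcup_i B i) x by rewrite eB.
  move=> [l _ Bx]; exists (B l) => //; have [a [sub tmp]] := HB l; split => //; split.
    by move=> y /sub Wy; rewrite -covW; exists j.
  have [n [Y [phi [ch [F [tF eF]]]]]] := tmp; exists n, Y, phi; split => //.
  by exists F; split => // y hy; rewrite (et j y (sub _ hy)); exact: eF.
have H : forall i, exists W' : set X, [/\ Fam C W', W' `<=` V & A i `&` V `<=` W'].
  move=> i; have [opA [n [Y [phi ch]]]] := affA i.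
  have [m [Bs [CB covB]]] := qc (V := V) ch (fun B (hB : C B) => opI _ _ hB.1.1 opA) (fun x _ hV => covC x hV).
  exists (\bigcup_l Bs l); split.
  - by exists m, Bs.
  - by move=> x [l _ h]; have [_ [sub _]] := CB l; exact: sub.
  - by move=> x [hA hV]; have [l hl] := covB x hA hV; exists l.
have [Wf HWf] := choice H.
have eV : V = \bigcup_i Wf i.
  apply: funext => x; apply: propext; split.
    move=> hV; have : (\bigcup_i A i) x by rewrite covA.
    by move=> [i _ hA]; exists i => //; have [_ _ h] := HWf i; exact: h.
  by move=> [i _ h]; have [_ h' _] := HWf i; exact: h'.
rewrite [X in Fam _ X]eV; apply: Fam_big => i; have [h _ _] := HWf i.
by apply: Fam_mono h => B [h1 [h2 h3]]; split => //; split => //.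
Qed.
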